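(* Let $f:\mathbb{R}^n\to(-\infty,+\infty]$ be proper, lower semicontinuous and prox-bounded with threshold $\lambda_f>0$. Then (i) $\operatorname{dom}\partial_p^\lambda f\ne\varnothing$ for every $0<\lambda<\lambda_f$; (ii) $\lambda_f=\sup\{\lambda>0:\operatorname{dom}\partial_p^\lambda f\ne\varnothing\}$.
   Context: Prox-bounded with threshold $\lambda_f=\sup\{\lambda>0:\inf_y\{f(y)+\frac1{2\lambda}\|y-x\|^2\}>-\infty\text{ for some }x\}$. $v\in\partial_p^\lambda f(x)$ iff $x\in\operatorname{dom}f$ and $f(y)\ge f(x)+\langle v,y-x\rangle-\frac1{2\lambda}\|y-x\|^2$ for all $y$; $\operatorname{dom}\partial_p^\lambda f=\{x:\partial_p^\lambda f(x)\ne\varnothing\}$. *)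

(* Defs.v *)
From HB Require Import structures.
From mathcomp Require Import all_boot all_order all_algebra.
From mathcomp Require Import all_classical all_reals all_analysis.
Set Implicit Arguments. Unset Strict Implicit. Unset Printing Implicit Defensive.
Import Order.TTheory GRing.Theory Num.Theory.
Import numFieldNormedType.Exports.
Local Open Scope ring_scope.
Local Open Scope classical_set_scope.

(* R^n is modelled as row vectors 'rV[R]_n over a realType R, with the
   (product) topology of MathComp-Analysis; the Euclidean inner product and
   squared norm are written explicitly. *)

Definition dotv (R : realType) (n : nat) (u v : 'rV[R]_n) : R :=
  \sum_(i < n) u ord0 i * v ord0 i.

Definition sqnorm (R : realType) (n : nat) (u : 'rV[R]_n) : R := dotv u u.

Definition proper_fun (R : realType) (n : nat) (f : 'rV[R]_n -> \bar R) : Prop :=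
  (forall x, (-oo < f x)%E) /\ exists x, (f x < +oo)%E.

Definition prox_bounded_params (R : realType) (n : nat) (f : 'rV[R]_n -> \bar R)
  : set R :=
  [set lam | 0 < lam /\ exists x : 'rV[R]_n,
     (-oo < ereal_inf [set (f y + ((2 * lam)^-1 * sqnorm (y - x))%:E)%E | y in setT])%E].

Definition prox_bounded (R : realType) (n : nat) (f : 'rV[R]_n -> \bar R) : Prop :=
  prox_bounded_params f !=set0.

Definition prox_threshold (R : realType) (n : nat) (f : 'rV[R]_n -> \bar R) : \bar R :=
  ereal_sup [set lam%:E | lam in prox_bounded_params f].

Definition dom (R : realType) (n : nat) (f : 'rV[R]_n -> \bar R) : set 'rV[R]_n :=
  [set x | (f x < +oo)%E].

Definition prox_subgrad (R : realType) (n : nat) (lam : R) (f : 'rV[R]_n -> \bar R)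
  (x v : 'rV[R]_n) : Prop :=
  dom f x /\ forall y : 'rV[R]_n,
    (f x + (dotv v (y - x) - (2 * lam)^-1 * sqnorm (y - x))%:E <= f y)%E.

Definition dom_prox_subdiff (R : realType) (n : nat) (lam : R)
  (f : 'rV[R]_n -> \bar R) : set 'rV[R]_n :=
  [set x | exists v, prox_subgrad lam f x v].

(* Main.v *)
Require Import Defs.
From HB Require Import structures.
From mathcomp Require Import all_boot all_order all_algebra.
From mathcomp Require Import all_classical all_reals all_analysis.
Import Order.TTheory GRing.Theory Num.Theory.
Import numFieldNormedType.Exports.
Local Open Scope ring_scope.
Local Open Scope classical_set_scope.
From mathcomp Require Import ring lra.

Lemma ebetween (R : realType) (x y : \bar R) : (x < y)%E ->
  exists r : R, (x < r%:E)%E /\ (r%:E < y)%E.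
Proof.
case: x => [a| |]; case: y => [b| |] //= h.
- exists ((a + b) / 2); rewrite !lte_fin; rewrite lte_fin in h.
  by have [] := midf_lt h.
- by exists (a + 1); rewrite !lte_fin ltrDl ltr01 ltey.
- by exists (b - 1); rewrite !lte_fin ltNye gtrDl ltrN10.
- by exists 0; rewrite ltNye ltey.
Qed.

Lemma lsc_min (R : realType) (T : topologicalType) (g : T -> \bar R) (A : set T) :
  A !=set0 -> compact A -> lower_semicontinuous g ->
  exists2 c, A c & forall t, A t -> (g c <= g t)%E.
Proof.
move=> [a0 Aa0] cA lg.
pose m := ereal_inf (g @` A).
have mlb t : A t -> (m <= g t)%E by move=> At; apply: ereal_inf_lbound; exists t.
have [mp|mnp] := eqVneq m +oo%E.
  exists a0 => // t At; have := mlb t At; rewrite mp leye_eq => /eqP ->.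
  exact: leey.
pose D := [set b : R | (m < b%:E)%E].
pose B (b : R) := [set y | A y /\ (g y < b%:E)%E].
have [b0 Db0] : exists b, D b.
  have : (m < +oo)%E by rewrite ltey.
  by move=> /ebetween [b [hb _]]; exists b.
have FF : Filter (filter_from D B).
  apply: filter_from_filter; first by exists b0.
  move=> b1 b2 D1 D2; have [h|h] := leP b1 b2.
  - exists b1 => // y [Ay gy]; split; split => //.
    by apply: (lt_le_trans gy); rewrite lee_fin.
  - exists b2 => // y [Ay gy]; split; split => //.
    by apply: (lt_le_trans gy); rewrite lee_fin ltW.
have PF : ProperFilter (filter_from D B).
  apply: filter_from_proper => b Db.
  have [_ [y Ay <-] gyb] := ereal_inf_lt Db.
  by exists y.
have FA : filter_from D B A by exists b0 => // y [].
have [x [Ax clx]] := cA _ PF FA.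
exists x => // t At; apply: le_trans (mlb t At).
rewrite leNgt; apply/negP => mx.
have [b [mb bx]] := @ebetween R _ _ mx.
have [V nV Vb] := lg x b bx.
have [y [[Ay gyb] Vy]] := clx (B b) V (ex_intro2 _ _ b mb (@subset_refl _ _)) nV.
by have := lt_trans gyb (Vb y Vy); rewrite ltxx.
Qed.

Lemma lsc_add (R : realType) (T : topologicalType) (f : T -> \bar R) (q : T -> R) :
  lower_semicontinuous f -> continuous q ->
  lower_semicontinuous (fun y => (f y + (q y)%:E)%E).
Proof.
move=> lf cq x a h.
have h1 : ((a - q x)%:E < f x)%E.
  move: h; case: (f x) => [r| |] //=; rewrite ?lte_fin ?ltey ?ltNye //.
  by move=> *; lra.
have [c [ac cf]] := @ebetween R _ _ h1.
rewrite lte_fin in ac.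
have [V1 nV1 V1c] := lf x c cf.
have d0 : 0 < c - (a - q x) by rewrite subr_gt0.
have nV2 := @cvgr_dist_lt _ _ _ _ _ q (q x) (cq x) _ d0.
exists (V1 `&` [set y | `|q x - q y| < c - (a - q x)]).
  apply: filterI; [exact: nV1| exact: nV2].
move=> y [/V1c fy qy].
move: fy; case: (f y) => [r| |] //=; rewrite ?lte_fin ?ltey ?ltNye //.
move=> cr.

move: qy => /= qy; have := ler_norm (q x - q y); lra.
Qed.

Lemma sum_cont (R : realType) (n : nat) (F : 'I_n -> 'rV[R]_n -> R) (s : seq 'I_n) :
  (forall i, continuous (F i)) -> continuous (fun y => \sum_(i <- s) F i y).
Proof.
move=> cF; elim: s => [|i s IH].
  under eq_fun do rewrite big_nil; exact: cst_continuous.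
under eq_fun do rewrite big_cons.
move=> x; apply: continuousD; [exact: cF | exact: IH].
Qed.

Lemma coordB_cont (R : realType) (n : nat) (x0 : 'rV[R]_n) i :
  continuous (fun y : 'rV[R]_n => (y - x0) ord0 i).
Proof.
rewrite (_ : (fun y => (y - x0) ord0 i) = (fun y => y ord0 i - x0 ord0 i)); last first.
  by apply/funext => y; rewrite !mxE.
move=> y; exact: (cvgB (@coord_continuous R 1 n ord0 i y) (cvg_cst _)).
Qed.

Lemma sqnorm_cont (R : realType) (n : nat) (x0 : 'rV[R]_n) :
  continuous (fun y : 'rV[R]_n => sqnorm (y - x0)).
Proof.
rewrite /sqnorm /dotv; apply: sum_cont => i y.
exact: (cvgM (@coordB_cont R n x0 i y) (@coordB_cont R n x0 i y)).
Qed.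

Lemma ident1 (R : realType) (n : nat) (c : R) (x0 p y : 'rV[R]_n) :
  c * sqnorm (y - x0) =
  c * sqnorm (y - p) - dotv ((2 * c) *: (x0 - p)) (y - p) + c * sqnorm (p - x0).
Proof.
rewrite /sqnorm /dotv !mulr_sumr -sumrB -big_split /=.
by apply: eq_bigr => j _; rewrite !mxE; ring.
Qed.

Lemma ident2 (R : realType) (n : nat) (c lam : R) (x v y : 'rV[R]_n) :
  c * sqnorm (y - (x + lam *: v)) =
  c * sqnorm (y - x) - (2 * c * lam) * dotv v (y - x) + c * lam ^+ 2 * sqnorm v.
Proof.
rewrite /sqnorm /dotv !mulr_sumr -sumrB -big_split /=.
by apply: eq_bigr => j _; rewrite !mxE; ring.
Qed.

Lemma coord_le_sqnorm (R : realType) (n : nat) (u : 'rV[R]_n) i :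
  u ord0 i * u ord0 i <= sqnorm u.
Proof.
rewrite /sqnorm /dotv (bigD1 i) //= lerDl.
by apply: sumr_ge0 => j _; rewrite -expr2 sqr_ge0.
Qed.

Lemma sqnorm_ge0 (R : realType) (n : nat) (u : 'rV[R]_n) : 0 <= sqnorm u.
Proof. by apply: sumr_ge0 => j _; rewrite -expr2 sqr_ge0. Qed.

Lemma subgrad_params (R : realType) (n : nat) (f : 'rV[R]_n -> \bar R) lam x v :
  proper_fun f -> 0 < lam -> prox_subgrad lam f x v -> prox_bounded_params f lam.
Proof.
move=> [fNy _] lam0 [domx hv]; split => //; exists (x + lam *: v).
rewrite /dom /= in domx; move: (fNy x) domx hv.
case: (f x) => [fx| |] //= _ _ hv.
apply: (@lt_le_trans _ _ (fx + lam / 2 * sqnorm v)%:E); first by rewrite ltNye.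
apply: le_ereal_inf_tmp => _ [y _ <-].
move: (hv y) (fNy y); case: (f y) => [fy| |] //=; rewrite ?lee_fin ?leey // => h _.
rewrite ident2.
have e1 : 2 * (2 * lam)^-1 * lam = 1 by field; rewrite gt_eqF.
have e2 : (2 * lam)^-1 * lam ^+ 2 = lam / 2 by field; rewrite gt_eqF.
rewrite e1 e2 mul1r; lra.
Qed.

Lemma part_i (R : realType) (n : nat) (f : 'rV[R]_n -> \bar R) :
  proper_fun f -> @lower_semicontinuous 'rV[R]_n R f ->
  forall lam mu : R, 0 < lam -> lam < mu -> prox_bounded_params f mu ->
  dom_prox_subdiff lam f !=set0.
Proof.
move=> [fNy [y1 fy1]] lf lam mu lam0 lammu [mu0 [x0 hinf]].
have [r [_ rI]] := @ebetween R _ _ hinf.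
have rb y : (r%:E <= f y + ((2 * mu)^-1 * sqnorm (y - x0))%:E)%E.
  by apply: le_trans (ltW rI) _; apply: ereal_inf_lbound; exists y.
move: (fNy y1) fy1 (rb y1); case E1: (f y1) => [F1| |] //= _ _.
rewrite lee_fin => rb1.
set k := (2 * lam)^-1; set k' := (2 * mu)^-1.
have rb' y : (r%:E <= f y + (k' * sqnorm (y - x0))%:E)%E by exact: rb.
have rb1' : r <= F1 + k' * sqnorm (y1 - x0) by exact: rb1.
clear rb rb1; rename rb' into rb; rename rb1' into rb1.
have cpos : 0 < k - k'.
  rewrite /k /k' (_ : _ - _ = (mu - lam) / (2 * lam * mu)); last first.
    by field; rewrite !gt_eqF.
  by rewrite divr_gt0 ?subr_gt0 // !mulr_gt0.
set c := k - k'.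
set G := F1 + k * sqnorm (y1 - x0).
set D := (G - r) / c.
set s := `|D| + 1.
have s1 : 1 <= s by rewrite /s lerDr.
have Ds : D <= `|D| := ler_norm D.
have Dlt : D < s by rewrite /s; lra.
have ss : s <= s * s by rewrite ler_pMr; lra.
clearbody s.
pose A := [set v : 'rV[R]_n | forall i,
  `[x0 ord0 i - s, x0 ord0 i + s]%classic (v ord0 i)].
have cA : compact A.
  exact: (@rV_compact _ _ (fun i => `[x0 ord0 i - s, x0 ord0 i + s]%classic)
    (fun i => @segment_compact R (x0 ord0 i - s) (x0 ord0 i + s))).
have A0 : A x0 by move=> i /=; rewrite in_itv /=; apply/andP; split; lra.
pose g y := (f y + (k * sqnorm (y - x0))%:E)%E.
have lg : lower_semicontinuous g.
  apply: lsc_add => // y.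
  exact: (cvgM (cvg_cst k) (@sqnorm_cont R n x0 y)).
have [p Ap pmin] := @lsc_min R _ g A (ex_intro _ x0 A0) cA lg.
have sq_out y : ~ A y -> D < sqnorm (y - x0).
  move/existsNP => [i ni].
  have h := @coord_le_sqnorm R n (y - x0) i; rewrite !mxE in h.
  move: ni; rewrite /= in_itv /= => /negP; rewrite negb_and -!ltNge => /orP[h1|h1].
  - nra.
  - nra.
have y1A : A y1.
  have [//|ny1] := pselect (A y1).
  have := sq_out _ ny1; rewrite /D ltr_pdivrMr // => h; exfalso.
  rewrite /G /c in h; nra.
have gmin y : (g p <= g y)%E.
  have [Ay|Ay] := pselect (A y); first exact: pmin.
  apply: le_trans (pmin _ y1A) _.
  rewrite /g E1; have := rb y; have := sq_out y Ay; move: (fNy y).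
  case: (f y) => [fy| |] //= _; rewrite ?leey // /D ltr_pdivrMr // lee_fin => h1 h2.
  rewrite lee_fin /G; rewrite /c /G in h1; nra.
have := gmin y1; rewrite /g E1; move: (fNy p).
case Ep: (f p) => [fp| |] //= _ hp.
exists p, ((2 * k) *: (x0 - p)); split; first by rewrite /dom /= Ep ltey.
move=> y; have := gmin y; rewrite /g Ep; move: (fNy y).
case: (f y) => [fy| |] //= _; rewrite ?leey // !lee_fin => h.
have := @ident1 R n k x0 p y.
rewrite -/k; lra.
Qed.

Theorem mainTheorem15 (R : realType) (n : nat) (f : 'rV[R]_n -> \bar R) :
  proper_fun f -> @lower_semicontinuous 'rV[R]_n R f -> prox_bounded f ->
  (0 < prox_threshold f)%E ->
  (forall lam : R, 0 < lam -> (lam%:E < prox_threshold f)%E ->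
     dom_prox_subdiff lam f !=set0) /\
  prox_threshold f =
    ereal_sup [set lam%:E | lam in [set lam : R | 0 < lam /\ dom_prox_subdiff lam f !=set0]].
Proof.
move=> pf lf pb tpos.
have partI : forall lam : R, 0 < lam -> (lam%:E < prox_threshold f)%E ->
    dom_prox_subdiff lam f !=set0.
  move=> lam l0 llt; have [_ [mu Pmu <-] lmu] := ereal_sup_gt llt.
  rewrite lte_fin in lmu; exact: (@part_i R n f pf lf lam mu l0 lmu Pmu).
split => //.
apply/eqP; rewrite eq_le; apply/andP; split.
- rewrite leNgt; apply/negP => h.
  have [_ [mu Pmu <-] hmu] := ereal_sup_gt h.
  have [b [hb bmu]] := @ebetween R _ _ hmu.
  rewrite lte_fin in bmu.
  have mu0 : 0 < mu by case: Pmu.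
  have mule : (mu%:E <= prox_threshold f)%E by apply: ereal_sup_ubound; exists mu.
  have [c [c0 [cmu bc]]] : exists c : R, 0 < c /\ c < mu /\ b <= c.
    have [hb2|hb2] := leP b (mu / 2).
    + by exists (mu / 2); split; [|split]; lra.
    + by exists b; split; [|split]; lra.
  have cS : (c%:E <= ereal_sup [set lam%:E | lam in
      [set lam : R | (0 < lam)%R /\ dom_prox_subdiff lam f !=set0]])%E.
    apply: ereal_sup_ubound; exists c => //; split => //; apply: partI => //.
    by apply: lt_le_trans mule; rewrite lte_fin.
  have bcE : (b%:E <= c%:E)%E by rewrite lee_fin.
  have := lt_le_trans hb (le_trans bcE cS).
  by rewrite ltxx.
- apply: ereal_sup_le => _ [lam [l0 [x [v hv]]] <-]; exists lam => //.
  exact: (@subgrad_params R n f lam x v pf l0 hv).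
Qed.
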